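(* Let $d\ge 2$, $2\le k\le d+1$, let $y_1,\dots,y_N\in\{1,\dots,k\}$ be labels of a class-balanced dataset (each class has exactly $N/k\ge 1$ samples), and let $s>0$. For $\boldsymbol w_1,\dots,\boldsymbol w_k,\boldsymbol z_1,\dots,\boldsymbol z_N\in\mathbb S^{d-1}$ let $\theta_{ij}=\arccos(\boldsymbol w_j^{\mathrm T}\boldsymbol z_i)\in[0,\pi]$, and for a function $f:[0,\pi]\to\mathbb R$ define the empirical risk $$L_f=\frac1N\sum_{i=1}^N-\log\frac{\exp(s f(\theta_{iy_i}))}{\exp(s f(\theta_{iy_i}))+\sum_{j\ne y_i}\exp(s\cos\theta_{ij})}.$$ Consider the following choices of $f$: (NormFace) $f(\theta)=\cos\theta$; (CosFace / AM-Softmax) $f(\theta)=\cos\theta-m$ with $m\ge0$; (ArcFace) $f(\theta)=\cos(\theta+m)$ with $m\in[0,\pi/2]$ and $\cos m\ge\frac12$; (A-Softmax with feature normalization) $f(\theta)=(-1)^\ell\cos(m\theta)-2\ell$ for $\theta\in[\ell\pi/m,(\ell+1)\pi/m]$, $\ell=0,\dots,m-1$, with $m\ge1$ an integer. Then for each of these losses, the set of minimizers of $L_f$ over $(\mathbb S^{d-1})^{k+N}$ is exactly the set of configurations with $\boldsymbol w_i^{\mathrm T}\boldsymbol w_j=-\frac1{k-1}$ for all $i\ne j$ and $\boldsymbol z_i=\boldsymbol w_{y_i}$ for all $i$; in particular all these losses share the same optimal solutions.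
   Context: $\mathbb S^{d-1}$ is the unit sphere in $\mathbb R^d$; $\boldsymbol w_j$ are class prototypes and $\boldsymbol z_i$ is the feature of a sample with label $y_i$. *)

(* Defs.v *)
From HB Require Import structures.
From mathcomp Require Import all_boot all_order all_algebra.
From mathcomp Require Import all_classical all_reals all_analysis.
Set Implicit Arguments. Unset Strict Implicit. Unset Printing Implicit Defensive.
Import Order.TTheory GRing.Theory Num.Theory.
Local Open Scope ring_scope.

Definition dotv {R : realType} {d : nat} (u v : 'rV[R]_d) : R :=
  \sum_(i < d) u ord0 i * v ord0 i.

Definition on_sphere {R : realType} {d : nat} (u : 'rV[R]_d) : Prop :=
  dotv u u = 1.

Definition angle {R : realType} {d : nat} (w z : 'rV[R]_d) : R :=
  acos (dotv w z).

Definition risk {R : realType} {d k N : nat} (s : R) (f : R -> R)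
  (y : 'I_N -> 'I_k) (W : 'I_k -> 'rV[R]_d) (Z : 'I_N -> 'rV[R]_d) : R :=
  N%:R^-1 * \sum_(i < N)
    - ln (expR (s * f (angle (W (y i)) (Z i))) /
          (expR (s * f (angle (W (y i)) (Z i))) +
           \sum_(j < k | j != y i) expR (s * cos (angle (W j) (Z i))))).

Definition normface_f {R : realType} (f : R -> R) : Prop :=
  forall t, 0 <= t <= pi -> f t = cos t.

Definition cosface_f {R : realType} (f : R -> R) : Prop :=
  exists m : R, 0 <= m /\ forall t, 0 <= t <= pi -> f t = cos t - m.

Definition arcface_f {R : realType} (f : R -> R) : Prop :=
  exists m : R, [/\ 0 <= m, m <= pi / 2, 2^-1 <= cos m &
    forall t, 0 <= t <= pi -> f t = cos (t + m)].

Definition asoftmax_f {R : realType} (f : R -> R) : Prop :=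
  exists m : nat, (1 <= m)%N /\
    forall (l : nat) (t : R), (l < m)%N ->
      l%:R * pi / m%:R <= t <= l.+1%:R * pi / m%:R ->
      f t = (-1) ^+ l * cos (m%:R * t) - 2 * l%:R.

Definition margin_fun {R : realType} (f : R -> R) : Prop :=
  [\/ normface_f f, cosface_f f, arcface_f f | asoftmax_f f].

Definition balanced {k N : nat} (y : 'I_N -> 'I_k) : Prop :=
  forall c : 'I_k, (#|[set i | y i == c]| * k)%N = N.

(* Main.v *)
Require Import Defs.
From HB Require Import structures.
From mathcomp Require Import all_boot all_order all_algebra.
From mathcomp Require Import all_classical all_reals all_analysis.
From mathcomp Require Import ring lra.
Import Order.TTheory GRing.Theory Num.Theory.
Local Open Scope ring_scope.
Set Implicit Arguments. Unset Strict Implicit. Unset Printing Implicit Defensive.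



Section Dot.
Variables (R : realType) (d : nat).
Implicit Types (u v w : 'rV[R]_d).

Lemma dotvC u v : dotv u v = dotv v u.
Proof. by apply: eq_bigr => i _; rewrite mulrC. Qed.

Lemma dotvDl u v w : dotv (u + v) w = dotv u w + dotv v w.
Proof. by rewrite /dotv -big_split; apply: eq_bigr => i _; rewrite !mxE mulrDl. Qed.

Lemma dotvZl a u w : dotv (a *: u) w = a * dotv u w.
Proof. by rewrite /dotv mulr_sumr; apply: eq_bigr => i _; rewrite !mxE mulrA. Qed.

Lemma dotvNl u w : dotv (- u) w = - dotv u w.
Proof. by rewrite /dotv -sumrN; apply: eq_bigr => i _; rewrite !mxE mulNr. Qed.

Lemma dotvBl u v w : dotv (u - v) w = dotv u w - dotv v w.
Proof. by rewrite dotvDl dotvNl. Qed.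

Lemma dotv0l w : dotv 0 w = 0.
Proof. by rewrite /dotv big1 // => i _; rewrite mxE mul0r. Qed.

Lemma dotv_suml (I : finType) (P : pred I) (F : I -> 'rV[R]_d) w :
  dotv (\sum_(j | P j) F j) w = \sum_(j | P j) dotv (F j) w.
Proof.
apply: (big_ind2 (fun a b => dotv a w = b)) => //.
- exact: dotv0l.
- by move=> x1 x2 y1 y2 <- <-; rewrite dotvDl.
Qed.

Lemma dotv_ge0 u : 0 <= dotv u u.
Proof. by apply: sumr_ge0 => i _; rewrite -expr2 sqr_ge0. Qed.

Lemma dotv_eq0 u : dotv u u = 0 -> u = 0.
Proof.
move=> H.
have E : \sum_(i < d) u ord0 i ^+ 2 = 0.
  by rewrite -{}[RHS]H; apply: eq_bigr => j _; rewrite expr2.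
apply/rowP => i; rewrite mxE.
have := psumr_eq0P (P := predT) (fun j _ => sqr_ge0 (u ord0 j)) E (i := i) erefl.
by move/eqP; rewrite sqrf_eq0 => /eqP ->.
Qed.
End Dot.



Section Sph.
Variables (R : realType) (d : nat).
Implicit Types (u v w : 'rV[R]_d).

Lemma dotvDr u v w : dotv w (u + v) = dotv w u + dotv w v.
Proof. by rewrite dotvC dotvDl !(dotvC w). Qed.
Lemma dotvNr u w : dotv w (- u) = - dotv w u.
Proof. by rewrite dotvC dotvNl dotvC. Qed.
Lemma dotvBr u v w : dotv w (u - v) = dotv w u - dotv w v.
Proof. by rewrite dotvDr dotvNr. Qed.
Lemma dotvZr a u w : dotv w (a *: u) = a * dotv w u.
Proof. by rewrite dotvC dotvZl dotvC. Qed.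

Lemma dot_bounds u v : on_sphere u -> on_sphere v -> -1 <= dotv u v <= 1.
Proof.
rewrite /on_sphere => hu hv.
have h1 := dotv_ge0 (u - v); have h2 := dotv_ge0 (u + v).
move: h1 h2; rewrite !dotvDl !dotvNl !dotvDr !dotvNr hu hv (dotvC v u).
move=> h1 h2; apply/andP; split; lra.
Qed.

Lemma cos_angle u v : on_sphere u -> on_sphere v -> cos (angle u v) = dotv u v.
Proof. by move=> hu hv; have [_ ->] := acos_def (dot_bounds hu hv). Qed.

Lemma angle_range u v : on_sphere u -> on_sphere v -> 0 <= angle u v <= pi.
Proof. by move=> hu hv; have [-> _] := acos_def (dot_bounds hu hv). Qed.

Lemma angle_self u : on_sphere u -> angle u u = 0.
Proof. by rewrite /on_sphere /angle => ->; exact: acos1. Qed.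
End Sph.

Section Margin.
Variable R : realType.

Lemma cos_anti (a b : R) : 0 <= a -> a <= b -> b <= pi -> cos b <= cos a.
Proof.
move=> a0 ab bpi.
have api : a <= pi by apply: le_trans bpi.
have b0 : 0 <= b by apply: le_trans ab.
rewrite leNgt ltr_cos ?in_itv /= ?a0 ?api ?b0 ?bpi //.
by rewrite -leNgt.
Qed.

Lemma asoft_l (m : nat) (t : R) : (1 <= m)%N -> 0 <= t <= pi ->
  exists l : nat, (l < m)%N /\ l%:R * pi / m%:R <= t <= l.+1%:R * pi / m%:R.
Proof.
move=> m1 /andP[t0 tpi].
have m0 : (0 : R) < m%:R by rewrite ltr0n.
suff H : forall L, (1 <= L <= m)%N -> t <= L%:R * pi / m%:R ->
  exists l : nat, (l < L)%N /\ l%:R * pi / m%:R <= t <= l.+1%:R * pi / m%:R.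
  apply: H; first by rewrite m1 leqnn.
  by rewrite -mulrA mulrC -mulrA mulVf ?mulr1 // gt_eqF.
elim => [|L IH]; first by [].
case/andP => L1 Lm tL.
case: L IH L1 Lm tL => [|L] IH _ Lm tL.
  by exists 0%N; split => //; rewrite mul0r mul0r t0 tL.
have [tle|tgt] := leP t (L.+1%:R * pi / m%:R).
  have [l [lL hl]] := IH (ltnW Lm) tle.
  by exists l; split => //; apply: ltn_trans lL _.
by exists L.+1; split => //; rewrite (ltW tgt) tL.
Qed.

Lemma margin_bound (f : R -> R) : margin_fun f -> exists fs : R,
  f 0 = fs /\ forall t, 0 <= t <= pi -> f t <= fs + (cos t - 1) / 2.
Proof.
have pi0 : (0 : R) <= pi by exact: ltW (pi_gt0 R).
have z0pi : (0 : R) <= (0 : R) <= (pi : R) by apply/andP; split => //.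
case.
- move=> hf; exists 1; split; first by rewrite hf // cos0.
  move=> t ht; rewrite hf //; have := cos_le1 t; lra.
- case=> m [m0 hf]; exists (1 - m); split; first by rewrite hf // cos0.
  move=> t ht; rewrite hf //; have := cos_le1 t; lra.
- case=> m [m0 mpi cm hf]; exists (cos m); split; first by rewrite hf // add0r.
  move=> t ht; rewrite hf // cosD.
  have st := sin_ge0_pi ht.
  have sm : 0 <= sin m.
    apply: sin_ge0_pi; rewrite m0 /=; apply: le_trans mpi _.
    rewrite ler_pdivrMr //; have := pi_gt0 R; lra.
  have ct := cos_le1 t.
  have h1 : 0 <= sin t * sin m by apply: mulr_ge0.
  have h2 : (cos m - 2^-1) * (cos t - 1) <= 0.
    by apply: mulr_ge0_le0; lra.
  lra.
- case=> m [m1 hf]; exists 1.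
  have m0 : (0 : R) < m%:R by rewrite ltr0n.
  split.
    rewrite (hf 0%N) //; first by rewrite expr0 mulr0 cos0 mul1r mulr0 subr0.
    rewrite !mul0r lexx /= mul1r divr_ge0 // ltW //.
  move=> t ht; have [l [lm hl]] := asoft_l m1 ht.
  rewrite (hf l) //.
  suff : (-1) ^+ l * cos (m%:R * t) - 2 * l%:R <= cos t.
    by have := cos_le1 t; lra.
  case: l lm hl => [|l] lm hl.
    rewrite expr0 mul1r mulr0 subr0; case/andP: ht => t0 tpi.
    apply: cos_anti => //.
      by rewrite -{1}[t]mul1r ler_wpM2r // ler1n.
    by case/andP: hl => _; rewrite mul1r ler_pdivlMr // mulrC.
  have h1 : (-1) ^+ l.+1 * cos (m%:R * t) <= 1.
    rewrite -signr_odd; case: (odd _); rewrite ?expr1 ?expr0 ?mulN1r ?mul1r.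
      by have := cos_geN1 (m%:R * t); lra.
    exact: cos_le1.
  have h2 : (1 : R) <= l.+1%:R by rewrite ler1n.
  have := cos_geN1 t; lra.
Qed.
End Margin.



Lemma sum_cst (R : ringType) (I : finType) (P : pred I) (a : R) :
  \sum_(i | P i) a = a * #|P|%:R.
Proof. by rewrite sumr_const mulr_natr. Qed.

Lemma t1 (R : realType) (I : finType) (P : pred I) (x : I -> R) (c M p : R) :
  \sum_(j | P j) (p * expR M * (expR (x j - c - M) - 1 - (x j - c - M))) =
  p * expR M * ((\sum_(j | P j) expR (x j)) / (expR c * expR M)) - p * expR M * #|P|%:R
              - p * expR M * \sum_(j | P j) (x j - c) + p * expR M * #|P|%:R * M.
Proof.
  rewrite (eq_bigr (fun j => p * expR M * (expR (x j) / (expR c * expR M))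
     + (- (p * expR M) + (- (p * expR M) * (x j - c) + p * expR M * M)))); last first.
    move=> j _; rewrite !expRB. 
    have h1 := expR_gt0 c. have h2 := expR_gt0 M. field. by rewrite !gt_eqF.
  rewrite big_split /= big_split /= big_split /= -!mulr_sumr -mulr_suml.
  rewrite !sum_cst. ring.
Qed.

Section Jensen.
Variable R : realType.

Definition gap (t : R) := expR t - 1 - t.

Lemma gap_ge0 t : 0 <= gap t.
Proof. rewrite /gap; have := expR_ge1Dx t; lra. Qed.

Lemma gap_eq0 t : gap t <= 0 -> t = 0.
Proof.
rewrite /gap => h; apply/eqP; apply: contraTT h => /expR_gt1Dx h.
rewrite -ltNge; lra.
Qed.

Lemma ln_le (a b : R) : 0 < a -> 0 < b -> (ln a <= ln b) = (a <= b).
Proof. by move=> a0 b0; rewrite ler_ln ?posrE. Qed.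

Lemma jensen (I : finType) (P : pred I) (x : I -> R) (c : R) :
  let m := #|P|%:R in let Q := 1 + m * expR c in let p := expR c / Q in
  ln Q + p * \sum_(j | P j) (x j - c) <= ln (1 + \sum_(j | P j) expR (x j)) /\
  (ln (1 + \sum_(j | P j) expR (x j)) <= ln Q + p * \sum_(j | P j) (x j - c) ->
   forall j, P j -> x j = c).
Proof.
move=> m Q p.
set E := \sum_(j | P j) expR (x j).
set Y := \sum_(j | P j) (x j - c).
set M := p * Y.
have ec0 := expR_gt0 c; have eM0 := expR_gt0 M.
have m0 : 0 <= m by rewrite ler0n.
have Q0 : 0 < Q by rewrite /Q; have := mulr_ge0 m0 (ltW ec0); lra.
have E0 : 0 <= E by apply: sumr_ge0 => j _; exact: ltW (expR_gt0 _).
set X := (1 + E) / Q.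
have X0 : 0 < X by rewrite divr_gt0 //; lra.
have QX : 1 + E = Q * X by rewrite /X mulrC -mulrA mulVf ?mulr1 // gt_eqF.
set T := \sum_(j | P j) (p * expR M * gap (x j - c - M)).
have T1 : T = p * expR M * (E / (expR c * expR M)) - p * expR M * m
              - p * expR M * Y + p * expR M * m * M.
  by rewrite /T /gap t1.
have ident : X - expR M = Q^-1 * expR M * gap (- M) + T.
  rewrite T1 /gap /X /M /p /Q expRN; field.
  by rewrite !gt_eqF //; have := mulr_ge0 m0 (ltW ec0); lra.
have T0 : 0 <= T.
  apply: sumr_ge0 => j _; apply: mulr_ge0; last exact: gap_ge0.
  by apply: mulr_ge0; [rewrite divr_ge0 // ltW | exact: ltW].
have G0 : 0 <= Q^-1 * expR M * gap (- M).
  apply: mulr_ge0; last exact: gap_ge0.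
  by apply: mulr_ge0; [rewrite invr_ge0 ltW | exact: ltW].
have lnE : ln (1 + E) = ln Q + ln X by rewrite QX lnM ?posrE.
split.
  rewrite lnE lerD2l -{1}(expRK M) ln_le //; lra.
rewrite lnE lerD2l -{1}(expRK M) ln_le // => XM j Pj.
have Z : Q^-1 * expR M * gap (- M) + T = 0 by lra.
move/eqP: Z; rewrite paddr_eq0 // => /andP[/eqP g1 /eqP T2].
have M0 : M = 0.
  move: g1 => /eqP; rewrite !mulf_eq0 invr_eq0 (gt_eqF Q0) (gt_eqF eM0) /= => /eqP g1.
  by rewrite -[M]opprK (gap_eq0 (t := -M)) ?g1 ?oppr0.
have := psumr_eq0P (F := fun j => p * expR M * gap (x j - c - M)) _ T2 Pj.
move=> /(_ (fun j _ => mulr_ge0 (mulr_ge0 (divr_ge0 (ltW ec0) (ltW Q0)) (ltW eM0)) (gap_ge0 _))).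
have hp : p != 0 by rewrite gt_eqF // divr_gt0.
move/eqP; rewrite mulf_eq0 mulf_eq0 (negbTE hp) (gt_eqF eM0) /= => /eqP g2.
have := @gap_eq0 (x j - c - M); rewrite g2 lexx => /(_ erefl); rewrite M0; lra.
Qed.
End Jensen.



Lemma loss_rw (R : realType) (I : finType) (P : pred I) (A : R) (B : I -> R) :
  - ln (expR A / (expR A + \sum_(j | P j) expR (B j))) =
  ln (1 + \sum_(j | P j) expR (B j - A)).
Proof.
have eA := expR_gt0 A.
have T0 : 0 <= \sum_(j | P j) expR (B j) by apply: sumr_ge0 => j _; exact: ltW (expR_gt0 _).
rewrite -lnV ?posrE; last by rewrite divr_gt0 //; lra.
rewrite invf_div; congr (ln _).
rewrite [X in _ = 1 + X](eq_bigr (fun j => expR (B j) / expR A)); last by move=> j _; rewrite expRB.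
rewrite -mulr_suml; field; by rewrite gt_eqF.
Qed.

Lemma card_neq (k : nat) (c : 'I_k) : #|(fun j : 'I_k => j != c)| = k.-1.
Proof. by rewrite -[k in k.-1]card_ord -(cardC1 c); apply: eq_card => j. Qed.

Lemma sum_neq (R : realType) (k : nat) (F : 'I_k -> R) (c : 'I_k) :
  \sum_(j | j != c) F j = \sum_j F j - F c.
Proof. by rewrite [X in _ = X - _](bigD1 c) //= [F c + _]addrC addrK. Qed.

Lemma sum_by_class (R : realType) (k N : nat) (y : 'I_N -> 'I_k) (F : 'I_k -> R) :
  \sum_(i < N) F (y i) = \sum_(c < k) #|[set i | y i == c]|%:R * F c.
Proof.
rewrite (partition_big y predT) //; apply: eq_bigr => c _.
rewrite (eq_bigr (fun _ => F c)); last by move=> i /andP[_ /eqP ->].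
rewrite sum_cst mulrC; congr (_%:R * _); apply: eq_card => i; rewrite !inE; done.
Qed.



Section ETF.
Variables (R : realType) (d k : nat).
Hypotheses (k2 : (2 <= k)%N) (kd : (k <= d.+1)%N).

Let K := k.-1.
Let Kr : R := K%:R.
Let kr : R := k%:R.
Let t : R := Num.sqrt kr.
Let q : R := Num.sqrt Kr.
Let al : R := t / q.
Let be : R := (1 - t) / (Kr * q).
Let ga : R := - 1 / q.

Let g (j r : nat) : R := if (j < K)%N then al * (r == j)%:R + be else ga.

Definition etfW (j : 'I_k) : 'rV[R]_d :=
  \row_(r < d) (if (r < K)%N then g j r else 0).

Lemma KdE : (K <= d)%N.
Proof. by rewrite /K -ltnS prednK // (leq_trans _ k2). Qed.

Lemma dot_etf (j l : 'I_k) : dotv (etfW j) (etfW l) = \sum_(r < K) g j r * g l r.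
Proof.
rewrite (big_ord_widen d (fun r => g j r * g l r) KdE) big_mkcond /=.
by apply: eq_bigr => r _; rewrite !mxE; case: ifP => _; rewrite ?mul0r.
Qed.

Lemma sum_ind (j : nat) : (j < K)%N -> \sum_(r < K) ((r : nat) == j)%:R = 1 :> R.
Proof.
move=> jK; rewrite (bigD1 (Ordinal jK)) //= eqxx big1 ?addr0 // => r hr.
case: eqP => // rj; move: hr; suff -> : r = Ordinal jK by rewrite eqxx.
by apply: val_inj.
Qed.

Lemma sum_ind2 (j l : nat) : (j < K)%N ->
  \sum_(r < K) (((r : nat) == j)%:R * ((r : nat) == l)%:R) = (j == l)%:R :> R.
Proof.
move=> jK; transitivity ((j == l)%:R * \sum_(r < K) ((r : nat) == j)%:R : R).
  rewrite mulr_sumr; apply: eq_bigr => r _.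
  by case: eqP => [->|_]; rewrite ?eqxx ?mul0r ?mulr0 ?mul1r ?mulr1.
by rewrite sum_ind // mulr1.
Qed.

Lemma Kr_gt0 : 0 < Kr.
Proof. by rewrite /Kr ltr0n /K -ltnS prednK // (leq_trans _ k2). Qed.

Lemma krE : kr = Kr + 1.
Proof.
have k0 : (0 < k)%N by apply: leq_trans k2.
by rewrite /kr /Kr /K -[in LHS](prednK k0) -addn1 natrD.
Qed.

Lemma q_gt0 : 0 < q.
Proof. by rewrite /q sqrtr_gt0 Kr_gt0. Qed.

Lemma ht : t ^+ 2 = kr.
Proof. by rewrite /t sqr_sqrtr // /kr ler0n. Qed.

Lemma hq : q ^+ 2 = Kr.
Proof. by rewrite /q sqr_sqrtr // ltW // Kr_gt0. Qed.

Lemma A1 : al ^+ 2 + 2 * al * be + Kr * be ^+ 2 = 1.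
Proof.
have q0 := q_gt0; have K0 := Kr_gt0.
have -> : al ^+ 2 + 2 * al * be + Kr * be ^+ 2 = (t ^+ 2 * (Kr - 1) + 1) / (Kr * q ^+ 2).
  by rewrite /al /be; field; rewrite !gt_eqF.
rewrite ht hq krE; field; by rewrite gt_eqF.
Qed.

Lemma A2 : 2 * al * be + Kr * be ^+ 2 = - Kr^-1.
Proof.
have q0 := q_gt0; have K0 := Kr_gt0.
have -> : 2 * al * be + Kr * be ^+ 2 = (1 - t ^+ 2) / (Kr * q ^+ 2).
  by rewrite /al /be; field; rewrite !gt_eqF.
rewrite ht hq krE; field; by rewrite gt_eqF.
Qed.

Lemma A3 : ga * (al + Kr * be) = - Kr^-1.
Proof.
have q0 := q_gt0; have K0 := Kr_gt0.
have -> : ga * (al + Kr * be) = - 1 / q ^+ 2.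
  by rewrite /al /be /ga; field; rewrite !gt_eqF.
by rewrite hq mulN1r.
Qed.

Lemma A4 : Kr * ga ^+ 2 = 1.
Proof.
have q0 := q_gt0; have K0 := Kr_gt0.
have -> : Kr * ga ^+ 2 = Kr / q ^+ 2.
  by rewrite /ga; field; rewrite !gt_eqF.
by rewrite hq divff // gt_eqF.
Qed.

Lemma gen_dot (j l : nat) : (j < K)%N -> (l < K)%N ->
  \sum_(r < K) g j r * g l r = al ^+ 2 * (j == l)%:R + 2 * al * be + Kr * be ^+ 2.
Proof.
move=> jK lK; rewrite /g jK lK.
rewrite (eq_bigr (fun r : 'I_K => al ^+ 2 * (((r : nat) == j)%:R * ((r : nat) == l)%:R)
   + (al * be * ((r : nat) == j)%:R + (al * be * ((r : nat) == l)%:R + be ^+ 2)))); last first.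
  by move=> r _; ring.
rewrite !big_split /= -!mulr_sumr sum_ind2 // !sum_ind // sum_cst card_ord -/Kr; rewrite /al /be; ring.
Qed.

Lemma etf_sphere j : on_sphere (etfW j).
Proof.
rewrite /on_sphere dot_etf.
have [jK|jK] := ltnP j K.
  by rewrite gen_dot // eqxx mulr1; exact: A1.
have jf : (j < K)%N = false by rewrite ltnNge jK.
rewrite /g jf sum_cst card_ord.
by transitivity (Kr * ga ^+ 2); [rewrite /Kr; ring | exact: A4].
Qed.

Lemma etf_dot i j : i != j -> dotv (etfW i) (etfW j) = - (k.-1%:R)^-1.
Proof.
move=> ij; rewrite dot_etf -/K -/Kr.
have ij' : ((i : nat) == j) = false by apply/negbTE.
have [iK|iK] := ltnP i K; have [jK|jK] := ltnP j K.
- by rewrite gen_dot // ij' mulr0 add0r A2.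
- rewrite /g iK ltnNge jK /=.
  rewrite (eq_bigr (fun r : 'I_K => ga * (al * ((r : nat) == i)%:R) + ga * be)); last first.
    by move=> r _; ring.
  rewrite big_split /= -!mulr_sumr sum_ind // sum_cst card_ord.
  transitivity (ga * (al + Kr * be)); last exact: A3.
  by rewrite /Kr /be; ring.
- rewrite /g jK ltnNge iK /=.
  rewrite (eq_bigr (fun r : 'I_K => ga * (al * ((r : nat) == j)%:R) + ga * be)); last first.
    by move=> r _; ring.
  rewrite big_split /= -!mulr_sumr sum_ind // sum_cst card_ord.
  transitivity (ga * (al + Kr * be)); last exact: A3.
  by rewrite /Kr /be; ring.
- exfalso; move: ij'.
  have kK : k = K.+1 by rewrite /K prednK // (leq_trans _ k2).
  have ik : (i < K.+1)%N by rewrite -kK ltn_ord.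
  have jk : (j < K.+1)%N by rewrite -kK ltn_ord.
  have -> : (i : nat) = K by apply/eqP; rewrite eqn_leq iK -ltnS ik.
  have -> : (j : nat) = K by apply/eqP; rewrite eqn_leq jK -ltnS jk.
  by rewrite eqxx.
Qed.
End ETF.



Lemma eq_ler (R : numDomainType) (x : R) : x = 0 -> x <= 0. Proof. by move=> ->. Qed.

Section Main.
Variables (R : realType) (d k N : nat) (y : 'I_N -> 'I_k) (s : R) (f : R -> R) (fs : R).
Hypotheses (k2 : (2 <= k)%N) (s0 : 0 < s) (hf0 : f 0 = fs)
  (hfb : forall t, 0 <= t <= pi -> f t <= fs + (cos t - 1) / 2).

Definition kr : R := k%:R.
Definition K1 : R := kr - 1.
Definition bet : R := (kr + 1) / 2.
Definition cst : R := s * (- K1^-1 - fs).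
Definition Qv : R := 1 + K1 * expR cst.
Definition pv : R := expR cst / Qv.

Lemma K1E : (k.-1)%:R = K1.
Proof.
rewrite /K1 /kr; have k0 : (0 < k)%N by apply: leq_trans k2.
by rewrite -{2}(prednK k0) -addn1 natrD addrK.
Qed.

Lemma K1gt0 : 0 < K1.
Proof. by rewrite /K1 /kr subr_gt0 ltr1n. Qed.

Lemma bet_gt0 : 0 < bet.
Proof. by rewrite /bet divr_gt0 // ltr_wpDl // ler0n. Qed.

Lemma Qv_gt0 : 0 < Qv.
Proof. rewrite /Qv; have := mulr_gt0 K1gt0 (expR_gt0 cst); lra. Qed.

Lemma pv_gt0 : 0 < pv.
Proof. by rewrite /pv divr_gt0 // ?expR_gt0 // Qv_gt0. Qed.

Definition Li (W : 'I_k -> 'rV[R]_d) (Z : 'I_N -> 'rV[R]_d) i :=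
  - ln (expR (s * f (angle (W (y i)) (Z i))) /
          (expR (s * f (angle (W (y i)) (Z i))) +
           \sum_(j < k | j != y i) expR (s * cos (angle (W j) (Z i))))).

Lemma riskE W Z : risk s f y W Z = N%:R^-1 * \sum_(i < N) Li W Z i.
Proof. by []. Qed.

Lemma sample_bound W Z (hW : forall j, on_sphere (W j)) (hZ : forall i, on_sphere (Z i)) i :
  let v := bet *: W (y i) - \sum_j W j in
  let D := Li W Z i - ln Qv - pv * s * (bet ^+ 2 - dotv v v) / (2 * bet) in
  0 <= D /\ (D <= 0 -> Z i = bet^-1 *: v /\
     forall j, j != y i -> s * dotv (W j) (Z i) - s * f (angle (W (y i)) (Z i)) = cst).
Proof.
move=> v D.
set z := Z i; set a := f (angle (W (y i)) z); set S := \sum_j W j.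
set u := dotv (W (y i)) z; set sz := dotv S z.
set x := fun j => s * dotv (W j) z - s * a.
have LiE : Li W Z i = ln (1 + \sum_(j | j != y i) expR (x j)).
  rewrite /Li loss_rw; congr (ln (1 + _)); apply: eq_bigr => j _.
  by rewrite /x cos_angle.
have [J1 J2] := jensen (fun j => j != y i) x cst.
rewrite card_neq K1E -/Qv -/pv -LiE in J1 J2.
have sumx : \sum_(j | j != y i) (x j - cst) = s * (sz - u) - K1 * (s * a + cst).
  rewrite sum_neq /x big_split /= big_split /= sumrN sumrN -mulr_sumr sum_cst card_ord.
  rewrite sum_cst card_ord /sz /S dotv_suml /u -/kr /K1; ring.
set B := fs + (u - 1) / 2 - a.
have B0 : 0 <= B.
  have := hfb (angle_range (hW (y i)) (hZ i)); rewrite cos_angle // -/u -/a /B; lra.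
set V := dotv v v; set vz := dotv v z.
have vzE : vz = bet * u - sz by rewrite /vz /v dotvBl dotvZl.
have hz : dotv z z = 1 by exact: hZ.
have Cid : dotv (v - bet *: z) (v - bet *: z) = V - 2 * bet * vz + bet ^+ 2.
  rewrite /V /vz; move: (v) => w.
  rewrite !dotvBl !dotvBr !dotvZl !dotvZr hz (dotvC z w); ring.
set C := (V / bet + bet) / 2 - vz.
have b0 := bet_gt0.
have CE : C = dotv (v - bet *: z) (v - bet *: z) / (2 * bet).
  rewrite Cid /C; field; by rewrite gt_eqF.
have C0 : 0 <= C by rewrite CE divr_ge0 ?dotv_ge0 // mulr_ge0 // ltW.
have ident : \sum_(j | j != y i) (x j - cst) =
   s * (bet ^+ 2 - V) / (2 * bet) + s * K1 * B + s * C.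
  rewrite sumx /C /B vzE /cst /bet /K1; field.
  have := K1gt0; rewrite /K1 /kr => h.
  by rewrite !gt_eqF //; have := ler0n R k; lra.
have Dsplit : D = (Li W Z i - ln Qv - pv * \sum_(j | j != y i) (x j - cst))
    + pv * s * K1 * B + pv * s * C.
  by rewrite /D ident -/V; ring.
have ps : 0 < pv * s by rewrite mulr_gt0 // pv_gt0.
have PB : 0 <= pv * s * K1 * B by rewrite mulr_ge0 // mulr_ge0 // ltW // K1gt0.
have PC : 0 <= pv * s * C by rewrite mulr_ge0 // ltW.
rewrite Dsplit; split; first lra.
move=> D0.
have Jle : Li W Z i <= ln Qv + pv * \sum_(j | j != y i) (x j - cst) by lra.
have xc := J2 Jle.
have Cle : pv * s * C <= 0 by lra.
have C00 : C <= 0.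
  move: ps Cle; set P := pv * s => ps Cle; nra.
have Q0 : dotv (v - bet *: z) (v - bet *: z) = 0.
  apply/eqP; rewrite eq_le dotv_ge0 andbT.
  have : C * (2 * bet) <= 0 by rewrite pmulr_lle0 // mulr_gt0.
  by rewrite CE mulfVK // gt_eqF // mulr_gt0.
have vz0 := dotv_eq0 Q0.
have -> : v = bet *: z by apply: subr0_eq.
split; first by rewrite scalerA mulVf ?scale1r // gt_eqF.
by move=> j hj; have := xc j hj; rewrite /x.
Qed.

Hypotheses (bal : balanced y) (kN : (k <= N)%N).

Lemma N_gt0 : (0 < N)%N.
Proof. by apply: leq_trans kN; apply: leq_trans k2. Qed.

Lemma sumV (W : 'I_k -> 'rV[R]_d) (hW : forall j, on_sphere (W j)) :
  let S := \sum_j W j in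
  \sum_(i < N) (bet ^+ 2 - dotv (bet *: W (y i) - S) (bet *: W (y i) - S)) =
  N%:R / kr * dotv S S.
Proof.
move=> S.
have kr0 : kr != 0 by rewrite /kr pnatr_eq0 -lt0n; apply: leq_trans k2.
rewrite sumrB sum_cst card_ord.
rewrite (sum_by_class y (fun c => dotv (bet *: W c - S) (bet *: W c - S))).
rewrite (eq_bigr (fun c => N%:R / kr * dotv (bet *: W c - S) (bet *: W c - S))); last first.
  move=> c _; congr (_ * _).
  have hb : (N%:R : R) = #|[set i | y i == c]|%:R * kr by rewrite /kr -natrM bal.
  by rewrite hb mulfK.
rewrite -mulr_sumr.
rewrite (eq_bigr (fun c => bet ^+ 2 - 2 * bet * dotv (W c) S + dotv S S)); last first.
  move=> c _; rewrite !dotvBl !dotvBr !dotvZl !dotvZr (hW c) (dotvC S (W c)); ring.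
rewrite big_split /= big_split /= sumrN !sum_cst card_ord -mulr_sumr -dotv_suml -/S -/kr.
rewrite /bet; field; exact: kr0.
Qed.

Lemma lower (W : 'I_k -> 'rV[R]_d) (Z : 'I_N -> 'rV[R]_d)
  (hW : forall j, on_sphere (W j)) (hZ : forall i, on_sphere (Z i)) :
  (ln Qv <= risk s f y W Z) /\ ((risk s f y W Z <= ln Qv) ->
    (forall i, Z i = W (y i)) /\ (forall i j, j != y i -> dotv (W j) (W (y i)) = - K1^-1)).
Proof.
set S := \sum_j W j.
pose Di i := Li W Z i - ln Qv - pv * s * (bet ^+ 2 - dotv (bet *: W (y i) - S)
   (bet *: W (y i) - S)) / (2 * bet).
have hD i : 0 <= Di i /\ (Di i <= 0 -> Z i = bet^-1 *: (bet *: W (y i) - S) /\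
     forall j, j != y i -> s * dotv (W j) (Z i) - s * f (angle (W (y i)) (Z i)) = cst).
  exact: (sample_bound hW hZ i).
have N0 : (0 : R) < N%:R by rewrite ltr0n N_gt0.
have kr0 : (0 : R) < kr by rewrite /kr ltr0n; apply: leq_trans k2.
have b0 := bet_gt0.
set T := pv * s / (2 * bet) * (N%:R / kr * dotv S S).
have T0 : 0 <= T.
  have ps : 0 < pv * s by rewrite mulr_gt0 // pv_gt0.
  apply: mulr_ge0; first by rewrite divr_ge0 ?ltW // mulr_gt0.
  by rewrite mulr_ge0 ?dotv_ge0 // divr_ge0 // ltW.
have SD0 : 0 <= \sum_(i < N) Di i by apply: sumr_ge0 => i _; case: (hD i).
have rE : risk s f y W Z = ln Qv + N%:R^-1 * (\sum_(i < N) Di i + T).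
  rewrite riskE /T -(sumV hW) -/S [_ * \sum_(i < N) (_ - _)]mulr_sumr -big_split /=.
  rewrite -[ln Qv](mulKf (lt0r_neq0 N0)) -mulrDr; congr (_ * _).
  rewrite (_ : N%:R * ln Qv = \sum_(i < N) ln Qv); last by rewrite sum_cst card_ord mulrC.
  rewrite -big_split /=.
  apply: eq_bigr => i _; rewrite /Di; field; by rewrite gt_eqF.
split; first by rewrite rE lerDl; apply: mulr_ge0; [rewrite invr_ge0 ltW | exact: addr_ge0].
rewrite rE gerDl pmulr_rle0 ?invr_gt0 // => H.
have SDz : \sum_(i < N) Di i = 0 by apply/eqP; rewrite eq_le SD0 andbT; lra.
have Tz : T = 0 by lra.
have Di0 i : Di i = 0 by apply: (psumr_eq0P _ SDz) => // j _; case: (hD j).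
have SS : dotv S S = 0.
  move: Tz; rewrite /T => /eqP; rewrite mulf_eq0 => /orP[|].
    have ps : 0 < pv * s by rewrite mulr_gt0 // pv_gt0.
    by rewrite gt_eqF // divr_gt0 // mulr_gt0.
  by rewrite mulf_eq0 (gt_eqF (divr_gt0 N0 kr0)) /= => /eqP.
have S0 := dotv_eq0 SS.
have Zi i : Z i = W (y i).
  have [_ H2] := hD i; have [-> _] := H2 (eq_ler (Di0 i)).
  by rewrite S0 subr0 scalerA mulVf ?scale1r // gt_eqF.
split => // i j hj.
have [_ H2] := hD i; have [_ H3] := H2 (eq_ler (Di0 i)).
have := H3 j hj; rewrite Zi angle_self // hf0 /cst => E.
have sne : s != 0 by rewrite gt_eqF.
apply: (mulfI sne); rewrite mulrN; lra.
Qed.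

Lemma etf_risk (W : 'I_k -> 'rV[R]_d) (hW : forall j, on_sphere (W j)) :
  (forall i j, i != j -> dotv (W i) (W j) = - K1^-1) ->
  risk s f y W (fun i => W (y i)) = ln Qv.
Proof.
move=> hG.
have N0 : (0 : R) < N%:R by rewrite ltr0n N_gt0.
rewrite riskE (eq_bigr (fun _ => ln Qv)).
  by rewrite sum_cst card_ord mulrC mulfK // gt_eqF.
move=> i _; rewrite /Li /= loss_rw angle_self // hf0.
rewrite (eq_bigr (fun _ => expR cst)).
  by rewrite sum_cst card_neq K1E mulrC.
move=> j hj; rewrite cos_angle // hG // /cst; congr expR; ring.
Qed.
End Main.

Theorem proposition2 (R : realType) (d k N : nat) (y : 'I_N -> 'I_k) (s : R)
  (f : R -> R) :
  (2 <= d)%N -> (2 <= k)%N -> (k <= d.+1)%N ->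
  balanced y -> (k <= N)%N -> 0 < s -> margin_fun f ->
  forall (W : 'I_k -> 'rV[R]_d) (Z : 'I_N -> 'rV[R]_d),
    (forall j, on_sphere (W j)) -> (forall i, on_sphere (Z i)) ->
    ((forall (W' : 'I_k -> 'rV[R]_d) (Z' : 'I_N -> 'rV[R]_d),
        (forall j, on_sphere (W' j)) -> (forall i, on_sphere (Z' i)) ->
        risk s f y W Z <= risk s f y W' Z')
     <->
     ((forall i j : 'I_k, i != j -> dotv (W i) (W j) = - (k.-1%:R)^-1) /\
      (forall i : 'I_N, Z i = W (y i)))).
Proof.
move=> d2 k2 kd bal kN s0 hm W Z hW hZ.
have [fs [hf0 hfb]] := margin_bound hm.
have [L1 L2] := lower k2 s0 hf0 hfb bal kN hW hZ.
split.
- move=> Hmin.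
  have hW0 : forall j, on_sphere (@etfW R d k j) by move=> j; exact: etf_sphere.
  have hG0 : forall i j, i != j -> dotv (@etfW R d k i) (@etfW R d k j) = - (K1 R k)^-1.
    by move=> i j ij; rewrite etf_dot // K1E.
  have := Hmin _ _ hW0 (fun i => hW0 (y i)).
  rewrite (etf_risk y s k2 hf0 kN hW0 hG0) => /L2 [HZ HG].
  split => // i j ij.
  have : (0 < #|[set n | y n == j]|)%N.
    rewrite lt0n; apply/negP => /eqP h; have := bal j; rewrite h mul0n => N0.
    by move: kN; rewrite -N0 leqn0 => /eqP k0; move: k2; rewrite k0.
  case/card_gt0P => n; rewrite inE => /eqP yn.
  by rewrite -yn HG ?yn // K1E.
- move=> [HG HZ] W' Z' hW' hZ'.
  have -> : Z = (fun i => W (y i)) by apply: funext => i; exact: HZ.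
  rewrite (etf_risk y s k2 hf0 kN hW); last by move=> i j ij; rewrite HG // K1E.
  by case: (lower k2 s0 hf0 hfb bal kN hW' hZ').
Qed.
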